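(* Let $M\geq 1$. A seller holds a set $\mathbb{M}$ of $M$ different goods, one unit of each, and has an arbitrary valuation function $\sigma$ over bundles of goods ($\sigma(X)$ is the seller's value for $X\subseteq\mathbb{M}$). The buyer has a unit-demand valuation: he values each item $i$ at $\beta_i$ and wants at most one item. The price of item $i$ is fixed exogenously at $p_i$, and both agents have utilities quasi-linear in money. Then the competitive ratio of any DSIC mechanism is at most $1/M$.
   Context: Selling item $i$ at price $p_i$ gives the buyer utility $b_i=\beta_i-p_i$ and the seller utility $s_i=p_i+\sigma(\mathbb{M}\setminus\{i\})-\sigma(\mathbb{M})$; option $0$ (no trade) gives both utility $0$. A mechanism receives the agents' reported valuations and outputs a probability distribution $(r_0,\dots,r_M)$ over which item (if any) is traded. It is DSIC if for each agent reporting the true valuation maximizes his expected utility ($\sum_i r_i b_i$ for the buyer, $\sum_i r_i s_i$ for the seller) whatever the other agent reports. The optimal gain-from-trade subject to individual rationality is $OPT=\max\{b_i+s_i: 0\leq i\leq M,\ b_i\geq 0,\ s_i\geq 0\}$ (with $b_0=s_0=0$); the mechanism's gain under truthful reports is $G=\sum_{i=1}^M r_i(b_i+s_i)$, and its competitive ratio is the minimum of $G/OPT$ over all valuation profiles. *)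

(* Defs.v *)
From HB Require Import structures.
From mathcomp Require Import all_boot all_order all_algebra.
From mathcomp Require Import reals.
Set Implicit Arguments. Unset Strict Implicit. Unset Printing Implicit Defensive.
Import Order.TTheory GRing.Theory Num.Theory.
Local Open Scope ring_scope.

Section Trade.
Variables (R : realType) (M : nat).

Definition buyer_valid (beta : 'I_M -> R) : Prop := forall i, 0 <= beta i.

Definition bu (p beta : 'I_M -> R) (i : 'I_M) : R := beta i - p i.

Definition su (p : 'I_M -> R) (sigma : {set 'I_M} -> R) (i : 'I_M) : R :=
  p i + sigma ([set: 'I_M] :\ i) - sigma [set: 'I_M].

(* A mechanism maps reports (beta, sigma) to the trade probabilities
   r_1..r_M of the items; r_0 = 1 - sum_i r_i is the no-trade probability. *)
Definition mechanism := ('I_M -> R) -> ({set 'I_M} -> R) -> 'I_M -> R.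

Definition valid_mechanism (mech : mechanism) : Prop :=
  forall beta sigma, buyer_valid beta ->
    (forall i, 0 <= mech beta sigma i) /\ \sum_i mech beta sigma i <= 1.

Definition exp_buyer (p : 'I_M -> R) (r : 'I_M -> R) (beta : 'I_M -> R) : R :=
  \sum_i r i * bu p beta i.

Definition exp_seller (p : 'I_M -> R) (r : 'I_M -> R)
  (sigma : {set 'I_M} -> R) : R := \sum_i r i * su p sigma i.

(* Dominant-strategy incentive compatibility (option 0 gives utility 0). *)
Definition DSIC (p : 'I_M -> R) (mech : mechanism) : Prop :=
  (forall beta beta' sigma, buyer_valid beta -> buyer_valid beta' ->
     exp_buyer p (mech beta' sigma) beta <= exp_buyer p (mech beta sigma) beta)
  /\
  (forall beta sigma sigma', buyer_valid beta ->
     exp_seller p (mech beta sigma') sigma <= exp_seller p (mech beta sigma) sigma).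

(* OPT = max { b_i + s_i : 0 <= i <= M, b_i >= 0, s_i >= 0 }, b_0 = s_0 = 0 *)
Definition OPT (p beta : 'I_M -> R) (sigma : {set 'I_M} -> R) : R :=
  \big[Num.max/0]_(i | (0 <= bu p beta i) && (0 <= su p sigma i))
     (bu p beta i + su p sigma i).

Definition gain (p : 'I_M -> R) (mech : mechanism) beta sigma : R :=
  \sum_i mech beta sigma i * (bu p beta i + su p sigma i).

End Trade.

(* Main.v *)
Require Import Defs.
From HB Require Import structures.
From mathcomp Require Import all_boot all_order all_algebra.
From mathcomp Require Import reals lra.
From Stdlib Require Import Classical_Prop.
Import Order.TTheory GRing.Theory Num.Theory.
Local Open Scope ring_scope.

Lemma setD1T_eq (M : nat) (i x : 'I_M) :
  ([set: 'I_M] :\ i == [set: 'I_M] :\ x) = (x == i).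
Proof.
apply/eqP/eqP => [h|->//].
have : x \notin [set: 'I_M] :\ x by rewrite !inE eqxx.
by rewrite -h !inE andbT negbK => /eqP.
Qed.

Lemma setT_neqD1 (M : nat) (x : 'I_M) :
  ([set: 'I_M] == [set: 'I_M] :\ x) = false.
Proof.
apply/negbTE/eqP => h.
have : x \in [set: 'I_M] :\ x by rewrite -h inE.
by rewrite !inE eqxx.
Qed.

Lemma sig_su (R : realType) (M : nat) (p t : 'I_M -> R) (i : 'I_M) :
  su p (fun X : {set 'I_M} => \sum_(j | X == [set: 'I_M] :\ j) (t j - p j)) i
  = t i.
Proof.
rewrite /su (big_pred1 i); last by move=> x; rewrite setD1T_eq.
rewrite big_pred0; last by move=> x; rewrite setT_neqD1.
lra.
Qed.

Lemma OPT_ge (R : realType) (M : nat) (p beta : 'I_M -> R)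
   (sigma : {set 'I_M} -> R) (j : 'I_M) :
  0 <= bu p beta j -> 0 <= su p sigma j ->
  bu p beta j + su p sigma j <= OPT p beta sigma.
Proof.
move=> h1 h2; rewrite /OPT.
have := @le_bigmax_cond _ _ _ 0 j (fun i => (0 <= bu p beta i) && (0 <= su p sigma i)) (fun i => bu p beta i + su p sigma i).
by rewrite h1 h2 /=; apply.
Qed.

Lemma final_arith (R : realType) (t0 tn x k N rho nn S A eps : R) :
  t0 + nn * (S * (rho - k)) <= tn -> tn <= S - S * x -> rho - k <= x ->
  N * rho = 1 + N * eps -> N = nn + 1 -> k <= eps / 2 -> - (2 * A) <= t0 ->
  S * eps = 8 * A -> 0 <= S -> 1 <= A -> 1 <= N -> 0 < eps -> False.
Proof.
move=> h1 h2 h3 h4 h5 h6 h7 h8 h9 h10 h11 h12.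
have h13 : S * (rho - k) <= S * x by apply: ler_wpM2l.
have h14 : N * (S * (rho - k)) <= S + 2 * A.
  rewrite h5 mulrDl mul1r; lra.
have h15 : 1 + eps / 2 <= N * (rho - k).
  rewrite mulrBr h4.
  have : N * k <= N * (eps / 2) by apply: ler_wpM2l => //; lra.
  have : 1 * (eps / 2) <= N * (eps / 2) by apply: ler_wpM2r => //; lra.
  lra.
have h16 : S * (1 + eps / 2) <= S * (N * (rho - k)) by apply: ler_wpM2l.
have h17 : S * (N * (rho - k)) = N * (S * (rho - k)) by rewrite mulrCA.
move: h16; rewrite h17 mulrDr mulr1 => h16.
have : S * (eps / 2) = 4 * A by rewrite mulrA h8; lra.
lra.
Qed.

Theorem corollary2 (R : realType) (M : nat) (hM : (1 <= M)%N)
    (p : 'I_M -> R) (mech : mechanism R M) :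
  valid_mechanism mech -> DSIC p mech ->
  forall eps : R, 0 < eps ->
    exists (beta : 'I_M -> R) (sigma : {set 'I_M} -> R),
      [/\ buyer_valid beta, 0 < OPT p beta sigma &
          gain p mech beta sigma / OPT p beta sigma < 1 / M%:R + eps].
Proof.
move=> vm [_ dsS] eps eps0.
case: M hM p mech vm dsS => [//|n] _ p mech vm dsS.
set A := 1 + \sum_i `|p i|.
have sum0 : 0 <= \sum_i `|p i| by apply: sumr_ge0 => i _; exact: normr_ge0.
have A1 : 1 <= A by rewrite /A; lra.
have Ap : forall i, - p i <= A - 1.
  move=> i; rewrite /A (bigD1 i) //=.
  have : 0 <= \sum_(j | j != i) `|p j| by apply: sumr_ge0 => j _; exact: normr_ge0.
  have : - p i <= `|p i| by rewrite -normrN ler_norm.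
  lra.
set K : R := 2 / eps + 2.
have K2 : 2 <= K.
  rewrite /K; have : 0 <= 2 / eps by apply: divr_ge0 => //; lra.
  lra.
set S : R := 8 * A / eps.
have S0 : 0 <= S by rewrite /S; apply: divr_ge0 => //; lra.
have Seps : S * eps = 8 * A by rewrite /S divfK //; apply/eqP =>  h; move: eps0; rewrite h ltxx.
pose bs := fix f (k : nat) : R := if k is k'.+1 then K * (f k' + S) else A.
have bsS : forall k, bs k.+1 = K * (bs k + S) by [].
have bsA : forall k, A <= bs k.
  elim=> [|k IH] /=; first lra.
  rewrite -/(bs k); nra.
have bsmono : forall i j, (i <= j)%N -> bs i <= bs j.
  move=> i j /subnK <-; elim: (j - i)%N => [|d IH] //=.
  have := bsA (d + i)%N; rewrite -/(bs (d + i)%N) in IH *; nra.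
set L := 2 * bs n.
set beta : 'I_n.+1 -> R := fun i => bs i + p i.
have bv : buyer_valid beta.
  move=> i; rewrite /beta; have := Ap i; have := bsA i; lra.
have bu_eq : forall i, bu p beta i = bs i by move=> i; rewrite /bu /beta; lra.
pose t := fun (m : nat) (i : 'I_n.+1) =>
  if (i < m)%N then S else if (i == m :> nat) then 0 else - L.
pose sig := fun (m : nat) (X : {set 'I_n.+1}) =>
  \sum_(j | X == [set: 'I_n.+1] :\ j) (t m j - p j).
have su_eq : forall m i, su p (sig m) i = t m i by move=> m i; apply: sig_su.
pose r := fun m => mech beta (sig m).
have r0 : forall m i, 0 <= r m i by move=> m i; exact: ((vm beta (sig m) bv).1 i).
have r1 : forall m, \sum_i r m i <= 1 by move=> m; exact: ((vm beta (sig m) bv).2).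
set N : R := n.+1%:R.
have N1 : 1 <= N by rewrite /N ler1n.
set rho : R := 1 / N + eps.
apply: NNPP => nex.
pose im := fun m : nat => (inord m : 'I_n.+1).
have imK : forall m, (m <= n)%N -> (im m : nat) = m by move=> m hm; rewrite /im inordK.
have L0 : 0 <= L by rewrite /L; have := bsA n; lra.
have tS : forall m i, t m i <= S.
  by move=> m i; rewrite /t; case: ifP => _; [lra| case: ifP => _; lra].
have tm : forall m, (m <= n)%N -> t m (im m) = 0.
  by move=> m hm; rewrite /t imK // ltnn eqxx.
have OPTge : forall m, (m <= n)%N -> bs m <= OPT p beta (sig m).
  move=> m hm; have := @OPT_ge R n.+1 p beta (sig m) (im m).
  rewrite bu_eq su_eq tm // imK // addr0; apply; last lra.
  by have := bsA m; lra.
have ratio : forall m, (m <= n)%N ->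
    rho <= gain p mech beta (sig m) / OPT p beta (sig m).
  move=> m hm; rewrite leNgt; apply/negP => hlt; apply: nex.
  exists beta, (sig m); split => //.
  by have := OPTge m hm; have := bsA m; lra.
have rho0 : 0 < rho.
  rewrite /rho; have h : 0 <= 1 / N by apply: divr_ge0; lra.
  move: (1 / N) h => x hx; lra.
have Gge : forall m, (m <= n)%N -> rho * bs m <= gain p mech beta (sig m).
  move=> m hm; have := ratio m hm.
  have hO := OPTge m hm; have := bsA m => hb.
  rewrite ler_pdivlMr; last lra.
  move=> h; apply: le_trans h; apply: ler_wpM2l; lra.
have K0 : 0 < K by lra.
have KV : K^-1 * K = 1 by rewrite mulVf //; apply/eqP => h; move: K0; rewrite h ltxx.
have bsK : forall m', bs m'.+1 / K = bs m' + S.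
  by move=> m'; rewrite bsS mulrC mulKf //; apply/eqP => h; move: K0; rewrite h ltxx.
have imE : forall m (i : 'I_n.+1), (m <= n)%N -> (i == im m) = (i == m :> nat).
  by move=> m i hm; rewrite -val_eqE /= imK.
have rsum : forall m, \sum_(i | i != im m) r m i <= 1 - r m (im m).
  by move=> m; have := r1 m; rewrite (bigD1 (im m)) //=; lra.
have rle1 : forall m, r m (im m) <= 1.
  move=> m; have := rsum m.
  have : 0 <= \sum_(i | i != im m) r m i by apply: sumr_ge0 => i _; exact: r0.
  lra.
have rm_ge : forall m, (m <= n)%N -> rho - K^-1 <= r m (im m).
  move=> m hm; have hG := Gge m hm; have hb := bsA m.
  have hX : 0 <= bs m / K by apply: divr_ge0; lra.
  have Gle : gain p mech beta (sig m) <= r m (im m) * bs m + bs m / K.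
    rewrite /gain (bigD1 (im m)) //=.
    rewrite bu_eq su_eq tm // imK // addr0.
    have hs : \sum_(i | i != im m) mech beta (sig m) i * (bu p beta i + su p (sig m) i)
        <= \sum_(i | i != im m) mech beta (sig m) i * (bs m / K).
      apply: ler_sum => i hi; apply: ler_wpM2l; first exact: r0.
      rewrite bu_eq su_eq /t; case: ifP => hlt.
        have hm1 : (0 < m)%N by apply: leq_ltn_trans hlt.
        rewrite -(prednK hm1) bsK.
        have : bs i <= bs m.-1 by apply: bsmono; rewrite -ltnS prednK.
        lra.
      case: ifP => heq.
        by move: hi; rewrite imE // heq.
      have : bs i <= bs n by apply: bsmono; rewrite -ltnS.
      have := bsA n; rewrite /L; lra.
    rewrite -mulr_suml in hs.
    have := rsum m; rewrite /r => hr.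
    have h2 : (\sum_(i | i != im m) mech beta (sig m) i) * (bs m / K) <= bs m / K.
      rewrite -[X in _ <= X]mul1r; apply: ler_wpM2r => //.
      have hh : 0 <= mech beta (sig m) (im m) := r0 m (im m).
      apply: (le_trans hr); lra.
    rewrite /r; lra.
  move: Gle hG hX; rewrite /r; move: (K^-1) (r m (im m)) => k x.
  rewrite mulrC; move=> h1 h2 h3; nra.
pose T := fun m => exp_seller p (r m) (sig m).
have tL : forall m i, - L <= t m i.
  by move=> m i; rewrite /t; case: ifP => _; [lra| case: ifP => _; lra].
have tmono : forall m i, t m i <= t m.+1 i.
  move=> m i; rewrite /t; case: (ltngtP i m) => h.
  - by rewrite ltnS (ltnW h); lra.
  - have h1 : (i < m)%N = false by rewrite ltnNge (ltnW h).
    have h2 : (i < m.+1)%N = false by rewrite ltnNge h.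
    have h3 : (nat_of_ord i == m) = false by rewrite gtn_eqF.
    rewrite h2; case: ifP => _; lra.
  - by rewrite h ltnSn; lra.
have chain : forall m, (m < n)%N -> T m + S * r m (im m) <= T m.+1.
  move=> m hm; have h := dsS beta (sig m.+1) (sig m) bv.
  apply: le_trans h; rewrite /T /exp_seller (bigD1 (im m)) //= [X in _ <= X](bigD1 (im m)) //=.
  rewrite !su_eq tm ?(ltnW hm) //.
  have -> : t m.+1 (im m) = S by rewrite /t imK ?(ltnW hm) // ltnSn.
  have : \sum_(i | i != im m) r m i * t m i <= \sum_(i | i != im m) r m i * t m.+1 i.
    by apply: ler_sum => i _; apply: ler_wpM2l; [exact: r0 | exact: tmono].
  under eq_bigr do rewrite su_eq.
  under [X in _ <= _ + X]eq_bigr do rewrite su_eq.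
  rewrite /r; lra.
have T_up : forall m, (m <= n)%N -> T m <= S - S * r m (im m).
  move=> m hm; rewrite /T /exp_seller (bigD1 (im m)) //= su_eq tm // mulr0 add0r.
  have : \sum_(i | i != im m) r m i * su p (sig m) i <= \sum_(i | i != im m) r m i * S.
    by apply: ler_sum => i _; apply: ler_wpM2l; [exact: r0 | rewrite su_eq; exact: tS].
  rewrite -mulr_suml => h; apply: (le_trans h).
  have := rsum m; rewrite /r => hr; nra.
have T0_low : - (2 * A) <= T 0.
  have hG := Gge 0%N (leq0n n).
  have hG0 : 0 <= gain p mech beta (sig 0%N).
    apply: le_trans hG; apply: mulr_ge0; [lra | have := bsA 0%N; lra].
  have bs0 : bs 0%N = A by [].
  move: hG0; rewrite /gain (bigD1 (im 0%N)) //= bu_eq su_eq tm // imK // addr0 bs0 => hG0.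
  rewrite /T /exp_seller (bigD1 (im 0%N)) //= su_eq tm // mulr0 add0r.
  have : \sum_(i | i != im 0%N) 2 * (mech beta (sig 0%N) i * (bu p beta i + su p (sig 0%N) i))
       <= \sum_(i | i != im 0%N) r 0%N i * su p (sig 0%N) i.
    apply: ler_sum => i hi; rewrite bu_eq su_eq /t ltn0.
    have -> : (nat_of_ord i == 0%N) = false by move: hi; rewrite imE // => /negbTE.
    have := bsmono i n (ltn_ord i : (i <= n)%N); have := r0 0%N i; rewrite /r /L => h1 h2.
    nra.
  rewrite -mulr_sumr => h.
  have h1 := rle1 0%N; have h0 := r0 0%N (im 0%N); rewrite /r in h1 h0 h *.
  nra.
have Tind : forall m, (m <= n)%N -> T 0%N + m%:R * (S * (rho - K^-1)) <= T m.
  elim=> [|m IH] hm; first by rewrite mul0r addr0.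
  have h1 := chain m hm; have h2 := IH (ltnW hm); have h3 := rm_ge m (ltnW hm).
  have -> : (m.+1)%:R = m%:R + 1 :> R by rewrite -addn1 natrD.
  move: h1 h2 h3; move: (r m (im m)) (K^-1) (T m) (T m.+1) (m%:R) => x k a b c.
  rewrite mulrDl mul1r; move=> h1 h2 h3; have h4 : S * (rho - k) <= S * x by apply: ler_wpM2l.
  lra.
have hn1 := Tind n (leqnn n); have hn2 := T_up n (leqnn n); have hn3 := rm_ge n (leqnn n).
have hNr : N * rho = 1 + N * eps.
  rewrite /rho mulrDr mul1r mulfV //; apply/eqP => h; move: N1; rewrite h; lra.
have hN : N = n%:R + 1 by rewrite /N -addn1 natrD.
have hk : K^-1 <= eps / 2.
  have hKV := KV; move: hKV; rewrite /K.
  have he : 2 / eps * eps = 2 by rewrite divfK //; apply/eqP => h; move: eps0; rewrite h ltxx.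
  have hkpos : 0 < K^-1 by rewrite invr_gt0.
  move: hkpos he; rewrite /K; move: (2 / eps) ((2 / eps + 2)^-1) => a k.
  move=> h1 h2 h3; nra.
have hT0 := T0_low.
exact: (@final_arith _ _ _ _ _ _ _ _ _ _ _ hn1 hn2 hn3 hNr hN hk hT0 Seps S0 A1 N1 eps0).
Qed.
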